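(* Let $\mathcal C=(\mathbf C^{(1)},\dots,\mathbf C^{(n)})$ be an MPS in (left-)canonical form centered at site $n$, with contraction $\mathbf C\neq0$ and bond dimensions $D_j\le D$ for $1\le j\le n-1$, and let $\delta$ be an $\epsilon$-perturbation of $\mathcal C$. Then as $\epsilon\to0$, $$\mathscr E_r(\mathcal C,\delta)\le\epsilon\Big(1+\sum_{j=1}^{n-1}\frac{\sqrt{D_j}\,\|C^{[j+1,n]}_\leftarrow\|_2}{\|\mathbf C\|_F}\Big)+O(\epsilon^2)\le\epsilon\big(1+(n-1)\sqrt D\big)+O(\epsilon^2).$$ Moreover the bounds are tight when all bond dimensions equal $D$: with suitable physical dimensions, the quantity $\lim_{\epsilon\to0^+}\epsilon^{-1}\sup_\delta\mathscr E_r(\mathcal C,\delta)$ (supremum over $\epsilon$-perturbations) can be made arbitrarily close to $1+(n-1)\sqrt D$ by a suitable choice of such a canonical MPS $\mathcal C$.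
   Context: MPS: an MPS with $n$ sites is a tensor network on a path: site $j$ carries a physical (uncontracted) leg $p_j$, and for $1\le j\le n-1$ a bond (contracted leg) $b_j$ of dimension $D_j$ joins sites $j$ and $j+1$; $\mathbf C^{(1)}$ has legs $(p_1,b_1)$, $\mathbf C^{(n)}$ has legs $(b_{n-1},p_n)$, and $\mathbf C^{(j)}$ for $1<j<n$ has legs $(b_{j-1},p_j,b_j)$. The contraction $\mathbf C$ sums over all bond indices the product of the site entries. $\mathbf C^{[a,b]}$ is the contraction of sites $a,\dots,b$ only; $C^{[j+1,n]}_\leftarrow$ is the matricization of $\mathbf C^{[j+1,n]}$ with rows indexed by $p_{j+1},\dots,p_n$ and columns by $b_j$. The MPS is in (left-)canonical form centered at site $n$ if for every $j\le n-1$ the matricization of $\mathbf C^{(j)}$ with rows indexed by $(b_{j-1},p_j)$ (just $p_1$ when $j=1$) and columns by $b_j$ is an isometry. An $\epsilon$-perturbation is a tuple $\delta=(\delta^{(i)})_{i=1}^n$, $\delta^{(i)}$ of the shape of $\mathbf C^{(i)}$, with $\|\delta^{(i)}\|_F\le\epsilon\|\mathbf C^{(i)}\|_F$; $\hat{\mathbf C}$ is the contraction of the sites $\mathbf C^{(i)}+\delta^{(i)}$ and $\mathscr E_r(\mathcal C,\delta)=\|\hat{\mathbf C}-\mathbf C\|_F/\|\mathbf C\|_F$. $\|\cdot\|_F$ Frobenius, $\|\cdot\|_2$ spectral norm. *)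

(* Defs.v *)
From Stdlib Require Import Reals Lra Lia.
Open Scope R_scope.

Fixpoint rsum (k : nat) (f : nat -> R) : R :=
  match k with
  | O => 0
  | S k' => rsum k' f + f k'
  end.

(** Sum over all physical multi-indices of the sites a, a+1, ..., a+m-1:
    p ranges over functions with p j < d j for those j (other entries 0). *)
Fixpoint msum (a m : nat) (d : nat -> nat) (F : (nat -> nat) -> R) : R :=
  match m with
  | O => F (fun _ => O)
  | S m' => rsum (d a) (fun i =>
              msum (S a) m' d (fun p => F (fun j => if Nat.eqb j a then i else p j)))
  end.

(** Sites are 1..n; site j has physical dimension d j.
    Bond b_j (1 <= j <= n-1) has dimension Dm j; we add dummy boundary bonds
    with Dm 0 = 1 and Dm n = 1, so every site tensor has three legs:
    A j a q b  with  a < Dm (j-1) (left bond), q < d j (physical),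
    b < Dm j (right bond).  Entries outside these ranges are irrelevant. *)
Definition site := nat -> nat -> nat -> nat -> R.

(** seg Dm A a m p : contraction of sites a..a+m-1 at physical index p,
    as a matrix (left bond b_{a-1}) x (right bond b_{a+m-1}). *)
Fixpoint seg (Dm : nat -> nat) (A : site) (a m : nat) (p : nat -> nat)
  : nat -> nat -> R :=
  match m with
  | O => fun x y => if Nat.eqb x y then 1 else 0
  | S m' => fun x y =>
      rsum (Dm (a + m' - 1)%nat)
        (fun z => seg Dm A a m' p x z * A (a + m')%nat z (p (a + m')%nat) y)
  end.

Definition contr (n : nat) (Dm : nat -> nat) (A : site) (p : nat -> nat) : R :=
  seg Dm A 1 n p O O.

Definition frobC (n : nat) (d Dm : nat -> nat) (A : site) : R :=
  sqrt (msum 1 n d (fun p => (contr n Dm A p) ^ 2)).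

Definition siteF (d Dm : nat -> nat) (A : site) (j : nat) : R :=
  sqrt (rsum (Dm (j - 1)%nat) (fun a => rsum (d j) (fun q =>
          rsum (Dm j) (fun b => (A j a q b) ^ 2)))).

Definition mps_shape (n : nat) (Dm : nat -> nat) : Prop :=
  (1 <= n)%nat /\ Dm O = 1%nat /\ Dm n = 1%nat.

(** Left-canonical form centered at site n: for 1 <= j <= n-1 the
    matricization (b_{j-1},p_j) x b_j of site j is an isometry (Q^T Q = I). *)
Definition left_canonical (n : nat) (d Dm : nat -> nat) (A : site) : Prop :=
  forall j, (1 <= j)%nat -> (j <= n - 1)%nat ->
  forall b b', (b < Dm j)%nat -> (b' < Dm j)%nat ->
    rsum (Dm (j - 1)%nat) (fun a => rsum (d j) (fun q => A j a q b * A j a q b'))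
    = (if Nat.eqb b b' then 1 else 0).

Definition contr_nonzero (n : nat) (d Dm : nat -> nat) (A : site) : Prop :=
  exists p : nat -> nat,
    (forall j, (1 <= j)%nat -> (j <= n)%nat -> (p j < d j)%nat) /\
    contr n Dm A p <> 0.

(** s is the spectral norm of the matricization C^{[j+1,n]}_<- (rows indexed by
    p_{j+1},...,p_n, columns by b_j):  s = sup { ||M x||_2 : ||x||_2 <= 1 }. *)
Definition is_spec_right (n : nat) (d Dm : nat -> nat) (A : site) (j : nat)
  (s : R) : Prop :=
  is_lub (fun r => exists x : nat -> R,
            rsum (Dm j) (fun c => (x c) ^ 2) <= 1 /\
            r = sqrt (msum (S j) (n - j) d (fun p =>
                  (rsum (Dm j) (fun c => seg Dm A (S j) (n - j) p c O * x c)) ^ 2)))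
         s.

Definition is_pert (n : nat) (d Dm : nat -> nat) (A : site) (eps : R)
  (delta : site) : Prop :=
  forall j, (1 <= j)%nat -> (j <= n)%nat ->
    siteF d Dm delta j <= eps * siteF d Dm A j.

Definition perturbed (A delta : site) : site :=
  fun j a q b => A j a q b + delta j a q b.

Definition relerr (n : nat) (d Dm : nat -> nat) (A delta : site) : R :=
  sqrt (msum 1 n d (fun p =>
          (contr n Dm (perturbed A delta) p - contr n Dm A p) ^ 2))
  / frobC n d Dm A.

(* Main.v *)
Require Import Defs.
From Stdlib Require Import Reals Lra Lia FunctionalExtensionality.
Open Scope R_scope.

Lemma rsum_ext k f g : (forall i, (i < k)%nat -> f i = g i) -> rsum k f = rsum k g.
Proof. induction k; simpl; intros H; auto. rewrite IHk, H; auto. Qed.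

Lemma rsum_plus k f g : rsum k (fun i => f i + g i) = rsum k f + rsum k g.
Proof. induction k; simpl; [lra|]. rewrite IHk; lra. Qed.

Lemma rsum_scal k c f : rsum k (fun i => c * f i) = c * rsum k f.
Proof. induction k; simpl; [lra|]. rewrite IHk; lra. Qed.

Lemma rsum_zero k : rsum k (fun _ => 0) = 0.
Proof. induction k; simpl; [lra|]. rewrite IHk; lra. Qed.

Lemma rsum_le k f g : (forall i, (i < k)%nat -> f i <= g i) -> rsum k f <= rsum k g.
Proof. induction k; simpl; intros H; [lra|]. pose proof (H k ltac:(lia)).
 pose proof (IHk ltac:(intros; apply H; lia)). lra. Qed.

Lemma rsum_nonneg k f : (forall i, (i < k)%nat -> 0 <= f i) -> 0 <= rsum k f.
Proof. intros H. rewrite <- (rsum_zero k). apply rsum_le; auto. Qed.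

Lemma rsum_swap k l f : rsum k (fun i => rsum l (fun j => f i j)) = rsum l (fun j => rsum k (fun i => f i j)).
Proof. induction k; simpl. { rewrite rsum_zero; auto. } rewrite IHk, <- rsum_plus; auto. Qed.

Lemma rsum_delta k a f : (a < k)%nat -> rsum k (fun i => (if Nat.eqb i a then 1 else 0) * f i) = f a.
Proof. induction k; intros H; [lia|]. simpl. destruct (Nat.eq_dec a k).
 - subst. rewrite Nat.eqb_refl. rewrite (rsum_ext _ _ (fun _ => 0)). rewrite rsum_zero; lra.
   intros i Hi. destruct (Nat.eqb_spec i k); [lia|lra].
 - destruct (Nat.eqb_spec k a); [lia|]. rewrite IHk by lia. lra. Qed.

Lemma rsum_mul k l f g : rsum k f * rsum l g = rsum k (fun i => rsum l (fun j => f i * g j)).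
Proof. induction k; simpl; [lra|]. rewrite <- IHk. rewrite rsum_scal. lra. Qed.

Lemma rsum_le_const k f c : (forall i, (i < k)%nat -> f i <= c) -> rsum k f <= INR k * c.
Proof. induction k; cbn [rsum]; intros H; [simpl; lra|]. rewrite S_INR.
 pose proof (H k ltac:(lia)). pose proof (IHk ltac:(intros; apply H; lia)). lra. Qed.

Lemma rsum_last1 f : rsum 1 f = f O.
Proof. simpl. lra. Qed.

Lemma msum_plus a m d F G : msum a m d (fun p => F p + G p) = msum a m d F + msum a m d G.
Proof. revert a F G; induction m; intros; simpl; auto.
 rewrite <- rsum_plus. apply rsum_ext; intros. apply IHm. Qed.

Lemma msum_scal a m d c F : msum a m d (fun p => c * F p) = c * msum a m d F.
Proof. revert a F; induction m; intros; simpl; auto.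
 rewrite <- rsum_scal. apply rsum_ext; intros. apply IHm. Qed.

Lemma msum_le a m d F G : (forall p, F p <= G p) -> msum a m d F <= msum a m d G.
Proof. revert a F G; induction m; intros; simpl; auto.
 apply rsum_le; intros. apply IHm; auto. Qed.

Lemma msum_zero a m d : msum a m d (fun _ => 0) = 0.
Proof. revert a; induction m; intros; simpl; auto.
 rewrite (rsum_ext _ _ (fun _ => 0)). apply rsum_zero. intros; apply IHm. Qed.

Lemma msum_nonneg a m d F : (forall p, 0 <= F p) -> 0 <= msum a m d F.
Proof. intros H. rewrite <- (msum_zero a m d). apply msum_le; auto. Qed.

Lemma msum_rsum a m d k F : msum a m d (fun p => rsum k (fun i => F p i)) = rsum k (fun i => msum a m d (fun p => F p i)).
Proof. revert a F; induction m; intros; simpl; auto.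
 rewrite (rsum_ext _ _ (fun i0 => rsum k (fun i => msum (S a) m d (fun p => F (fun j => if Nat.eqb j a then i0 else p j) i)))).
 apply rsum_swap. intros; apply IHm. Qed.

Lemma msum_msum a m b k d F : msum a m d (fun p => msum b k d (fun p' => F p p')) = msum b k d (fun p' => msum a m d (fun p => F p p')).
Proof. revert a F; induction m; intros; simpl; auto.
 rewrite (rsum_ext _ _ (fun i => msum b k d (fun p' => msum (S a) m d (fun p => F (fun j => if Nat.eqb j a then i else p j) p')))).
 2: intros; apply IHm.
 symmetry. apply msum_rsum. Qed.

Lemma msum_zerobelow a m d F G : (forall p, (forall i, (i < a)%nat -> p i = O) -> F p = G p) -> msum a m d F = msum a m d G.
Proof. revert a F G; induction m; intros a F G H; simpl.
 - apply H; auto.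
 - apply rsum_ext; intros i Hi. apply IHm. intros p Hp. apply H.
   intros j Hj. destruct (Nat.eqb_spec j a); [lia|]. apply Hp; lia. Qed.

Lemma msum_split a m k d F : msum a (m + k) d F =
  msum a m d (fun p => msum (a + m) k d (fun p' => F (fun i => if Nat.ltb i (a + m) then p i else p' i))).
Proof. revert a F; induction m; intros a F; simpl.
 - rewrite Nat.add_0_r. apply msum_zerobelow. intros p Hp. f_equal. extensionality i.
   destruct (Nat.ltb_spec i a); auto.
 - apply rsum_ext; intros i Hi. rewrite IHm. replace (S a + m)%nat with (a + S m)%nat by lia.
   f_equal. extensionality p. f_equal. extensionality p'. f_equal. extensionality j.
   destruct (Nat.eqb_spec j a); destruct (Nat.ltb_spec j (a + S m)); auto; lia. Qed.

Lemma msum_ge a m d F p : (forall q, 0 <= F q) -> (forall i, (a <= i)%nat -> (i < a + m)%nat -> (p i < d i)%nat) ->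
  F (fun i => if andb (Nat.leb a i) (Nat.ltb i (a + m)) then p i else O) <= msum a m d F.
Proof. revert a F; induction m; intros a F HF Hp; simpl.
 - right. f_equal. extensionality i. destruct (Nat.leb_spec a i), (Nat.ltb_spec i (a+0)); simpl; auto; lia.
 - assert (Ha : (p a < d a)%nat) by (apply Hp; lia).
   set (G := fun i0 => msum (S a) m d (fun p0 => F (fun j => if Nat.eqb j a then i0 else p0 j))).
   assert (Hs : rsum (d a) G >= G (p a)).
   { clear -Ha HF. assert (forall i, 0 <= G i) by (intros; apply msum_nonneg; auto).
     induction (d a) as [|k IHk]; [lia|]. simpl. destruct (Nat.eq_dec (p a) k).
     - rewrite e. assert (0 <= rsum k G) by (apply rsum_nonneg; auto). lra.
     - pose proof (IHk ltac:(lia)). specialize (H k). lra. }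
   eapply Rle_trans; [|apply Rge_le, Hs]. unfold G.
   eapply Rle_trans; [|apply IHm]. 3: { intros; apply Hp; lia. } 2: auto.
   right. f_equal. extensionality j. destruct (Nat.eqb_spec j a).
   + subst. rewrite Nat.leb_refl. destruct (Nat.ltb_spec a (a + S m)); simpl; auto; lia.
   + destruct (Nat.leb_spec a j), (Nat.leb_spec (S a) j), (Nat.ltb_spec j (a + S m)), (Nat.ltb_spec j (S a + m)); simpl; auto; lia.
Qed.

Definition PLF {T : Type} (Phi : (T -> R) -> R) : Prop :=
  (forall f g, Phi (fun x => f x + g x) = Phi f + Phi g) /\
  (forall c f, Phi (fun x => c * f x) = c * Phi f) /\
  (forall f, (forall x, 0 <= f x) -> 0 <= Phi f).

Section PLFs.
Context {T : Type} (Phi : (T -> R) -> R) (HP : PLF Phi).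

Lemma PLF_le f g : (forall x, f x <= g x) -> Phi f <= Phi g.
Proof. intros H. destruct HP as [H1 [H2 H3]].
 assert (E : g = fun x => f x + (g x - f x)) by (extensionality x; ring).
 rewrite E, H1. assert (0 <= Phi (fun x => g x - f x)) by (apply H3; intros; specialize (H x); lra). lra. Qed.

Lemma PLF_sq_nonneg f : 0 <= Phi (fun x => f x ^ 2).
Proof. apply HP. intros; nra. Qed.

Lemma PLF_CS f g : (Phi (fun x => f x * g x)) ^ 2 <= Phi (fun x => f x ^ 2) * Phi (fun x => g x ^ 2).
Proof. destruct HP as [H1 [H2 H3]].
 set (a := Phi (fun x => f x ^ 2)). set (b := Phi (fun x => g x ^ 2)). set (c := Phi (fun x => f x * g x)).
 assert (Q : forall t, 0 <= a - 2 * t * c + t ^ 2 * b).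
 { intros t. assert (E : (fun x => (f x - t * g x) ^ 2) =
      (fun x => f x ^ 2 + ((-2 * t) * (f x * g x) + t ^ 2 * g x ^ 2))) by (extensionality x; ring).
   pose proof (PLF_sq_nonneg (fun x => f x - t * g x)) as H. cbv beta in H. rewrite E, H1, H1, H2, H2 in H.
   unfold a, b, c. lra. }
 assert (Hb : 0 <= b) by apply PLF_sq_nonneg. assert (Ha : 0 <= a) by apply PLF_sq_nonneg.
 destruct (Req_dec b 0) as [Hb0|Hb0].
 - destruct (Req_dec c 0) as [Hc|Hc]. { rewrite Hc, Hb0. nra. }
   specialize (Q ((a + 1) / (2 * c))). rewrite Hb0 in Q.
   replace (a - 2 * ((a + 1) / (2 * c)) * c + ((a + 1) / (2 * c)) ^ 2 * 0) with (-1) in Q by (field; auto). lra.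
 - specialize (Q (c / b)).
   replace (a - 2 * (c / b) * c + (c / b) ^ 2 * b) with (a - c ^ 2 / b) in Q by (field; auto).
   assert (c ^ 2 / b <= a) by lra. apply (Rmult_le_compat_r b) in H; [|lra].
   unfold Rdiv in H. rewrite Rmult_assoc, Rinv_l in H by auto. lra. Qed.

Lemma PLF_CS' f g : Phi (fun x => f x * g x) <= sqrt (Phi (fun x => f x ^ 2)) * sqrt (Phi (fun x => g x ^ 2)).
Proof. rewrite <- sqrt_mult by apply PLF_sq_nonneg. pose proof (PLF_CS f g).
 set (c := Phi (fun x => f x * g x)) in *. destruct (Rle_dec c 0). 
 - pose proof (sqrt_pos (Phi (fun x => f x ^ 2) * Phi (fun x => g x ^ 2))). lra.
 - rewrite <- (sqrt_pow2 c) by lra. apply sqrt_le_1_alt. lra. Qed.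

Lemma PLF_Mink f g : sqrt (Phi (fun x => (f x + g x) ^ 2)) <= sqrt (Phi (fun x => f x ^ 2)) + sqrt (Phi (fun x => g x ^ 2)).
Proof. destruct HP as [H1 [H2 H3]].
 assert (E : (fun x => (f x + g x) ^ 2) = (fun x => f x ^ 2 + (2 * (f x * g x) + g x ^ 2))) by (extensionality x; ring).
 rewrite E, H1, H1, H2. pose proof (PLF_CS' f g).
 pose proof (PLF_sq_nonneg f). pose proof (PLF_sq_nonneg g).
 set (a := Phi (fun x => f x ^ 2)) in *. set (b := Phi (fun x => g x ^ 2)) in *.
 rewrite <- (sqrt_pow2 (sqrt a + sqrt b)) by (pose proof (sqrt_pos a); pose proof (sqrt_pos b); lra).
 apply sqrt_le_1_alt. replace ((sqrt a + sqrt b) ^ 2) with (sqrt a * sqrt a + 2 * (sqrt a * sqrt b) + sqrt b * sqrt b) by ring.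
 rewrite !sqrt_sqrt by auto. lra. Qed.

Lemma PLF_Mink_sum m (F : nat -> T -> R) :
  sqrt (Phi (fun x => (rsum m (fun i => F i x)) ^ 2)) <= rsum m (fun i => sqrt (Phi (fun x => F i x ^ 2))).
Proof. induction m; cbn [rsum].
 - destruct HP as [H1 [H2 H3]]. replace (fun _ : T => 0 ^ 2) with (fun x : T => 0 * 0) by (extensionality x; ring).
   rewrite H2. rewrite Rmult_0_l, sqrt_0. lra.
 - pose proof (PLF_Mink (fun x => rsum m (fun i => F i x)) (F m)). cbv beta in H. lra. Qed.

Lemma PLF_scale_sqrt c f : sqrt (Phi (fun x => (c * f x) ^ 2)) = Rabs c * sqrt (Phi (fun x => f x ^ 2)).
Proof. destruct HP as [H1 [H2 H3]].
 replace (fun x => (c * f x) ^ 2) with (fun x => c ^ 2 * f x ^ 2) by (extensionality x; ring).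
 rewrite H2, sqrt_mult by (try nra; apply PLF_sq_nonneg). f_equal. rewrite <- sqrt_Rsqr_abs. unfold Rsqr. f_equal; ring. Qed.

End PLFs.

Lemma PLF_rsum k : PLF (rsum k).
Proof. split; [|split]. apply rsum_plus. apply rsum_scal. intros; apply rsum_nonneg; auto. Qed.

Lemma PLF_msum a m d : PLF (msum a m d).
Proof. split; [|split]. apply msum_plus. apply msum_scal. apply msum_nonneg. Qed.

Definition st := (nat -> nat) -> nat -> R.

Lemma sub1 j : (S j - 1)%nat = j. Proof. lia. Qed.

Section MPS.
Variable d Dm : nat -> nat.

Definition Nrm (j : nat) (X : st) : R := msum 1 j d (fun p => rsum (Dm j) (fun y => X p y ^ 2)).
Definition PhiS (j : nat) (G : (nat -> nat) * nat -> R) : R := msum 1 j d (fun p => rsum (Dm j) (fun y => G (p, y))).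
Lemma PLF_PhiS j : PLF (PhiS j).
Proof. unfold PhiS; split; [|split].
 - intros f g. rewrite <- msum_plus. f_equal. extensionality p. apply rsum_plus.
 - intros c f. rewrite <- msum_scal. f_equal. extensionality p. apply rsum_scal.
 - intros f H. apply msum_nonneg. intros. apply rsum_nonneg; auto. Qed.
Definition nrm j X := sqrt (Nrm j X).
Lemma Nrm_Phi j X : Nrm j X = PhiS j (fun t => X (fst t) (snd t) ^ 2). Proof. reflexivity. Qed.
Lemma Nrm_nonneg j X : 0 <= Nrm j X.
Proof. apply msum_nonneg; intros; apply rsum_nonneg; intros; nra. Qed.

Definition star (B : site) (j : nat) (X : st) : st :=
  fun p y => rsum (Dm (j - 1)) (fun z => X p z * B j z (p j) y).
Definition Psi (B : site) (m : nat) : st := fun p y => seg Dm B 1 m p O y.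

Lemma Psi_S B m : Psi B (S m) = star B (S m) (Psi B m).
Proof. extensionality p; extensionality y. unfold Psi, star. simpl. 
 rewrite ?Nat.sub_0_r. reflexivity. Qed.

Definition depL (j : nat) (X : st) := forall p p', (forall i, (1 <= i)%nat -> (i <= j)%nat -> p i = p' i) -> forall y, X p y = X p' y.

Lemma seg_dep B a k p p' x y : (forall i, (a <= i)%nat -> (i < a + k)%nat -> p i = p' i) -> seg Dm B a k p x y = seg Dm B a k p' x y.
Proof. revert y; induction k; intros y H; simpl; auto.
 apply rsum_ext; intros z Hz. rewrite IHk by (intros; apply H; lia). rewrite (H (a + k)%nat) by lia. auto. Qed.

Lemma Psi_dep B m : depL m (Psi B m).
Proof. intros p p' H y. unfold Psi. apply seg_dep. intros; apply H; lia. Qed.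

Lemma star_dep B j X : depL j X -> depL (S j) (star B (S j) X).
Proof. intros H p p' Hp y. unfold star. apply rsum_ext; intros. rewrite (H p p') by (intros; apply Hp; lia).
 rewrite (Hp (S j)) by lia. auto. Qed.

Lemma star_plus B j X Y : star B j (fun p y => X p y + Y p y) = fun p y => star B j X p y + star B j Y p y.
Proof. extensionality p; extensionality y. unfold star. rewrite <- rsum_plus. apply rsum_ext; intros; ring. Qed.

Lemma star_minus B j X Y : star B j (fun p y => X p y - Y p y) = fun p y => star B j X p y - star B j Y p y.
Proof. extensionality p; extensionality y. unfold star.
 rewrite (rsum_ext _ _ (fun z => X p z * B j z (p j) y + (-1) * (Y p z * B j z (p j) y))) by (intros; ring).
 rewrite rsum_plus, rsum_scal. ring. Qed.

Lemma star_rsum B j k (G : nat -> st) : star B j (fun p z => rsum k (fun i => G i p z)) = fun p y => rsum k (fun i => star B j (G i) p y).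
Proof. extensionality p; extensionality y. unfold star.
 rewrite (rsum_ext _ _ (fun z => rsum k (fun i => G i p z * B j z (p j) y))).
 apply rsum_swap. intros. rewrite Rmult_comm, <- rsum_scal. apply rsum_ext; intros; ring. Qed.

Definition ext (j : nat) (p : nat -> nat) (q : nat) : nat -> nat :=
  fun i => if Nat.ltb i (S j) then p i else if Nat.eqb i (S j) then q else O.

Lemma msum_last j F : msum 1 (S j) d F = msum 1 j d (fun p => rsum (d (S j)) (fun q => F (ext j p q))).
Proof. replace (S j) with (j + 1)%nat at 1 by lia. rewrite msum_split. reflexivity. Qed.

Lemma star_ext B j X p q y : depL j X -> star B (S j) X (ext j p q) y = rsum (Dm j) (fun z => X p z * B (S j) z q y).
Proof. intros H. unfold star. rewrite sub1. apply rsum_ext; intros z _.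
 rewrite (H (ext j p q) p). 2:{ intros i Hi Hi'. unfold ext. destruct (Nat.ltb_spec i (S j)); auto; lia. }
 unfold ext. rewrite Nat.ltb_irrefl, Nat.eqb_refl. auto. Qed.

Definition IsoP (j : nat) (X : st) := forall z z', (z < Dm j)%nat -> (z' < Dm j)%nat ->
  msum 1 j d (fun p => X p z * X p z') = if Nat.eqb z z' then 1 else 0.

Lemma bil j X B B' y y' : depL j X -> IsoP j X ->
  msum 1 (S j) d (fun p => star B (S j) X p y * star B' (S j) X p y') =
  rsum (d (S j)) (fun q => rsum (Dm j) (fun z => B (S j) z q y * B' (S j) z q y')).
Proof. intros Hd Hi. rewrite msum_last.
 transitivity (msum 1 j d (fun p => rsum (d (S j)) (fun q => rsum (Dm j) (fun z => rsum (Dm j) (fun z' =>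
    (B (S j) z q y * B' (S j) z' q y') * (X p z * X p z')))))).
 { f_equal. extensionality p. apply rsum_ext; intros q _. rewrite !star_ext by auto. rewrite rsum_mul.
   apply rsum_ext; intros; apply rsum_ext; intros; ring. }
 rewrite msum_rsum. apply rsum_ext; intros q _. rewrite msum_rsum. apply rsum_ext; intros z Hz.
 rewrite msum_rsum. rewrite (rsum_ext _ _ (fun z' => (if Nat.eqb z' z then 1 else 0) * (B (S j) z q y * B' (S j) z' q y'))).
 apply rsum_delta; auto.
 intros z' Hz'. rewrite msum_scal, Hi by auto. rewrite Nat.eqb_sym. destruct (Nat.eqb z' z); ring. Qed.

Lemma sq_sqrt x : 0 <= x -> sqrt x ^ 2 = x.
Proof. intros; simpl; rewrite Rmult_1_r, sqrt_sqrt; auto. Qed.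

Lemma siteF_sq B j : siteF d Dm B j ^ 2 = rsum (Dm (j - 1)) (fun a => rsum (d j) (fun q => rsum (Dm j) (fun b => (B j a q b) ^ 2))).
Proof. unfold siteF. apply sq_sqrt. apply rsum_nonneg; intros; apply rsum_nonneg; intros; apply rsum_nonneg; intros; nra. Qed.

Lemma Nrm_star_iso j X B : depL j X -> IsoP j X -> Nrm (S j) (star B (S j) X) = siteF d Dm B (S j) ^ 2.
Proof. intros Hd Hi. unfold Nrm. rewrite siteF_sq, sub1.
 assert (E : (fun p => rsum (Dm (S j)) (fun y => star B (S j) X p y ^ 2)) =
     (fun p => rsum (Dm (S j)) (fun y => star B (S j) X p y * star B (S j) X p y))).
 { extensionality p. apply rsum_ext; intros; ring. }
 rewrite E.
 rewrite msum_rsum. rewrite (rsum_ext (Dm (S j)) _ (fun y => rsum (d (S j)) (fun q => rsum (Dm j) (fun z => B (S j) z q y ^ 2)))).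
 2:{ intros. rewrite bil by auto. apply rsum_ext; intros; apply rsum_ext; intros; ring. }
 rewrite (rsum_swap (Dm (S j)) (d (S j))).
 rewrite (rsum_ext (d (S j)) _ (fun q => rsum (Dm j) (fun z => rsum (Dm (S j)) (fun y => B (S j) z q y ^ 2)))).
 2:{ intros. apply rsum_swap. }
 apply rsum_swap. Qed.

Lemma rsum_CS k f g : (rsum k (fun i => f i * g i)) ^ 2 <= rsum k (fun i => f i ^ 2) * rsum k (fun i => g i ^ 2).
Proof. apply (PLF_CS (rsum k) (PLF_rsum k)). Qed.

Lemma Nrm_star_le j X B : depL j X -> Nrm (S j) (star B (S j) X) <= Nrm j X * siteF d Dm B (S j) ^ 2.
Proof. intros Hd. unfold Nrm at 1. rewrite msum_last.
 eapply Rle_trans. apply msum_le. intros p.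
 apply (rsum_le _ _ (fun q => rsum (Dm (S j)) (fun y => rsum (Dm j) (fun z => X p z ^ 2) * rsum (Dm j) (fun z => B (S j) z q y ^ 2)))).
 intros q _. apply rsum_le; intros y _. rewrite star_ext by auto. apply rsum_CS.
 right. rewrite siteF_sq, sub1. unfold Nrm. rewrite Rmult_comm, <- msum_scal. f_equal. extensionality p.
 set (SX := rsum (Dm j) (fun z => X p z ^ 2)).
 transitivity (SX * rsum (d (S j)) (fun q => rsum (Dm (S j)) (fun y => rsum (Dm j) (fun z => B (S j) z q y ^ 2)))).
 { rewrite <- rsum_scal. apply rsum_ext; intros. rewrite <- rsum_scal. apply rsum_ext; intros. auto. }
 rewrite Rmult_comm. f_equal.
 rewrite (rsum_ext (d (S j)) _ (fun q => rsum (Dm j) (fun z => rsum (Dm (S j)) (fun y => B (S j) z q y ^ 2)))).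
 2:{ intros. apply rsum_swap. }
 apply rsum_swap. Qed.

Lemma nrm_star_le j X B : depL j X -> nrm (S j) (star B (S j) X) <= nrm j X * siteF d Dm B (S j).
Proof. intros Hd. unfold nrm. rewrite <- (sqrt_pow2 (siteF d Dm B (S j))) by (unfold siteF; apply sqrt_pos).
 rewrite <- sqrt_mult by (try apply Nrm_nonneg; nra). apply sqrt_le_1_alt. apply Nrm_star_le; auto. Qed.

End MPS.

Lemma rsum_const k c : rsum k (fun _ => c) = INR k * c.
Proof. induction k; cbn [rsum]; [simpl; lra|]. rewrite IHk, S_INR. ring. Qed.

Lemma rsum_sq_zero k f : rsum k (fun i => f i ^ 2) = 0 -> forall i, (i < k)%nat -> f i = 0.
Proof. induction k; intros H i Hi; [lia|]. cbn [rsum] in H.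
 assert (0 <= rsum k (fun i => f i ^ 2)) by (apply rsum_nonneg; intros; nra).
 assert (0 <= f k ^ 2) by nra.
 destruct (Nat.eq_dec i k). { subst. nra. } apply IHk; [lra|lia]. Qed.

Definition PhiT (d Dm : nat -> nat) (j : nat) (G : nat * nat * nat -> R) : R :=
  rsum (Dm (j - 1)%nat) (fun a => rsum (d j) (fun q => rsum (Dm j) (fun b => G (a, q, b)))).
Lemma PLF_PhiT d Dm j : PLF (PhiT d Dm j).
Proof. unfold PhiT; split; [|split].
 - intros f g. rewrite <- rsum_plus. apply rsum_ext; intros. rewrite <- rsum_plus. apply rsum_ext; intros. apply rsum_plus.
 - intros c f. rewrite <- rsum_scal. apply rsum_ext; intros. rewrite <- rsum_scal. apply rsum_ext; intros. apply rsum_scal.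
 - intros f H. apply rsum_nonneg; intros; apply rsum_nonneg; intros; apply rsum_nonneg; auto. Qed.

Lemma siteF_plus d Dm A B j : siteF d Dm (perturbed A B) j <= siteF d Dm A j + siteF d Dm B j.
Proof. exact (PLF_Mink _ (PLF_PhiT d Dm j) (fun t => A j (fst (fst t)) (snd (fst t)) (snd t)) (fun t => B j (fst (fst t)) (snd (fst t)) (snd t))). Qed.

Lemma siteF_nonneg d Dm A j : 0 <= siteF d Dm A j.
Proof. unfold siteF; apply sqrt_pos. Qed.

Lemma nrm_plus d Dm j X Y : nrm d Dm j (fun p y => X p y + Y p y) <= nrm d Dm j X + nrm d Dm j Y.
Proof. exact (PLF_Mink _ (PLF_PhiS d Dm j) (fun t => X (fst t) (snd t)) (fun t => Y (fst t) (snd t))). Qed.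

Lemma nrm_sum d Dm j m (G : nat -> st) : nrm d Dm j (fun p y => rsum m (fun i => G i p y)) <= rsum m (fun i => nrm d Dm j (G i)).
Proof. exact (PLF_Mink_sum _ (PLF_PhiS d Dm j) m (fun i t => G i (fst t) (snd t))). Qed.

Lemma nrm_nonneg d Dm j X : 0 <= nrm d Dm j X.
Proof. apply sqrt_pos. Qed.

Lemma star_pert Dm A B j X : star Dm (perturbed A B) j X = fun p y => star Dm A j X p y + star Dm B j X p y.
Proof. extensionality p; extensionality y. unfold star, perturbed. rewrite <- rsum_plus. apply rsum_ext; intros; ring. Qed.

Lemma rsum_lastn k f : (1 <= k)%nat -> rsum k f = rsum (k - 1) f + f (k - 1)%nat.
Proof. intros H. destruct k; [lia|]. simpl. rewrite Nat.sub_0_r. reflexivity. Qed.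

Section Core.
Variable n : nat.
Variable d Dm : nat -> nat.
Variable A : site.
Hypothesis Hn : (1 <= n)%nat.
Hypothesis HD0 : Dm O = 1%nat.
Hypothesis HDn : Dm n = 1%nat.
Hypothesis Hlc : left_canonical n d Dm A.

Fixpoint Q (j m : nat) (X : st) : st :=
  match m with O => X | S m' => if Nat.ltb m' j then X else star Dm A (S m') (Q j m' X) end.

Lemma Q_id j X : Q j j X = X.
Proof. destruct j; simpl; auto. destruct (Nat.ltb_spec j (S j)); auto; lia. Qed.

Lemma Q_S j m X : (j <= m)%nat -> Q j (S m) X = star Dm A (S m) (Q j m X).
Proof. intros H. simpl. destruct (Nat.ltb_spec m j); auto; lia. Qed.

Lemma Q_dep j m X : depL j X -> (j <= m)%nat -> depL m (Q j m X).
Proof. intros Hd. induction m; intros H.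
 - replace j with O in * by lia. simpl. auto.
 - destruct (Nat.eq_dec j (S m)). { subst. rewrite Q_id. auto. }
   rewrite Q_S by lia. apply star_dep. apply IHm. lia. Qed.

Lemma Q_plus j m X Y : Q j m (fun p y => X p y + Y p y) = fun p y => Q j m X p y + Q j m Y p y.
Proof. induction m; simpl; auto. destruct (Nat.ltb m j); auto. rewrite IHm, star_plus. auto. Qed.

Lemma QR j k X p y : Q j (j + S k) X p y = rsum (Dm j) (fun c => X p c * seg Dm A (S j) (S k) p c y).
Proof. revert y. induction k; intros y.
 - replace (j + 1)%nat with (S j) by lia. rewrite Q_S, Q_id by lia. unfold star. rewrite sub1.
   apply rsum_ext; intros c Hc. f_equal. simpl. rewrite ?Nat.add_0_r, ?Nat.sub_0_r.
   rewrite (rsum_ext _ _ (fun z => (if Nat.eqb z c then 1 else 0) * A (S j) z (p (S j)) y)).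
   { symmetry. apply (rsum_delta (Dm j) c (fun z => A (S j) z (p (S j)) y)); auto. }
   intros z _. rewrite Nat.eqb_sym. destruct (Nat.eqb c z); ring.
 - replace (j + S (S k))%nat with (S (j + S k)) by lia. rewrite Q_S by lia. unfold star.
   replace (S (j + S k) - 1)%nat with (j + S k)%nat by lia.
   rewrite (rsum_ext _ _ (fun z => rsum (Dm j) (fun c => X p c * (seg Dm A (S j) (S k) p c z * A (S (j + S k)) z (p (S (j + S k))) y)))).
   2:{ intros z _. rewrite IHk. rewrite Rmult_comm, <- rsum_scal. apply rsum_ext; intros; ring. }
   rewrite rsum_swap. apply rsum_ext; intros c _. rewrite rsum_scal. f_equal.
   change (seg Dm A (S j) (S (S k)) p c y) with (rsum (Dm (S j + S k - 1)) (fun z => seg Dm A (S j) (S k) p c z * A (S j + S k)%nat z (p (S j + S k)%nat) y)).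
   replace (S j + S k - 1)%nat with (j + S k)%nat by lia. replace (S j + S k)%nat with (S (j + S k)) by lia. auto. Qed.

Lemma Nrm_n X : Nrm d Dm n X = msum 1 n d (fun p => X p O ^ 2).
Proof. unfold Nrm. rewrite HDn. f_equal. extensionality p. rewrite rsum_last1. auto. Qed.

Lemma split_n j X : (1 <= j)%nat -> (j <= n - 1)%nat -> depL j X ->
  Nrm d Dm n (Q j n X) = msum 1 j d (fun p => msum (S j) (n - j) d (fun p' =>
     (rsum (Dm j) (fun c => seg Dm A (S j) (n - j) p' c O * X p c)) ^ 2)).
Proof. intros H1 H2 Hd. rewrite Nrm_n.
 assert (E : n = (j + S (n - j - 1))%nat) by lia.
 replace (n - j)%nat with (S (n - j - 1)) by lia. set (k := (n - j - 1)%nat) in *. rewrite E.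
 rewrite msum_split. f_equal. extensionality p. replace (1 + j)%nat with (S j) by lia. f_equal. extensionality p'.
 rewrite QR. f_equal. apply rsum_ext; intros c _. rewrite Rmult_comm. f_equal.
 - apply seg_dep. intros i Hi Hi'. destruct (Nat.ltb_spec i (S j)); auto; lia.
 - apply Hd. intros i Hi Hi'. destruct (Nat.ltb_spec i (S j)); auto; lia. Qed.

Lemma Psi_Q j m : (j <= m)%nat -> Psi Dm A m = Q j m (Psi Dm A j).
Proof. induction m; intros H.
 - replace j with O by lia. auto.
 - destruct (Nat.eq_dec j (S m)). { subst. rewrite Q_id. auto. }
   rewrite Q_S, Psi_S, <- IHm by lia. auto. Qed.

Lemma Psi_iso j : (j <= n - 1)%nat -> IsoP d Dm j (Psi Dm A j).
Proof. induction j; intros H.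
 - intros z z' Hz Hz'. rewrite HD0 in *. replace z with O by lia. replace z' with O by lia. simpl. unfold Psi; simpl; ring.
 - intros z z' Hz Hz'. rewrite Psi_S. rewrite bil by (try apply Psi_dep; apply IHj; lia).
   rewrite <- (Hlc (S j)) by lia. rewrite sub1. apply rsum_swap. Qed.

Lemma sq_mul x : x ^ 2 = x * x. Proof. ring. Qed.

Lemma iso_quad j X (Rv : nat -> R) : IsoP d Dm j X ->
  msum 1 j d (fun p => (rsum (Dm j) (fun c => Rv c * X p c)) ^ 2) = rsum (Dm j) (fun c => Rv c ^ 2).
Proof. intros Hi.
 transitivity (msum 1 j d (fun p => rsum (Dm j) (fun c => rsum (Dm j) (fun c' => (Rv c * Rv c') * (X p c * X p c'))))).
 { f_equal. extensionality p. rewrite sq_mul, rsum_mul. apply rsum_ext; intros; apply rsum_ext; intros; ring. }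
 rewrite msum_rsum. apply rsum_ext; intros c Hc. rewrite msum_rsum.
 rewrite (rsum_ext _ _ (fun c' => (if Nat.eqb c' c then 1 else 0) * (Rv c * Rv c'))).
 { rewrite rsum_delta by auto. ring. }
 intros c' Hc'. rewrite msum_scal, Hi by auto. rewrite Nat.eqb_sym. destruct (Nat.eqb c c'); ring. Qed.

Lemma frob_sq : frobC n d Dm A ^ 2 = Nrm d Dm n (Psi Dm A n).
Proof. unfold frobC. rewrite sq_sqrt. 2:{ apply msum_nonneg; intros; nra. } rewrite Nrm_n. auto. Qed.

Lemma frob_pos : frobC n d Dm A >= 0.
Proof. unfold frobC. apply Rle_ge, sqrt_pos. Qed.

Lemma FR j : (1 <= j)%nat -> (j <= n - 1)%nat ->
  msum (S j) (n - j) d (fun p' => rsum (Dm j) (fun c => seg Dm A (S j) (n - j) p' c O ^ 2)) = frobC n d Dm A ^ 2.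
Proof. intros H1 H2. rewrite frob_sq, (Psi_Q j n) by lia. rewrite split_n by (auto; apply Psi_dep).
 rewrite msum_msum. f_equal. extensionality p'. symmetry. apply iso_quad. apply Psi_iso; lia. Qed.

Lemma frob_site : frobC n d Dm A = siteF d Dm A n.
Proof. assert (E : n = S (n - 1)) by lia.
 assert (H : frobC n d Dm A ^ 2 = siteF d Dm A n ^ 2).
 { rewrite frob_sq. rewrite E at 1 2 3. rewrite Psi_S. apply Nrm_star_iso. apply Psi_dep. apply Psi_iso; lia. }
 pose proof frob_pos. assert (0 <= siteF d Dm A n) by (unfold siteF; apply sqrt_pos).
 rewrite <- (sqrt_pow2 (frobC n d Dm A)), <- (sqrt_pow2 (siteF d Dm A n)) by lra. rewrite H. auto. Qed.

Lemma site_lc j : (1 <= j)%nat -> (j <= n - 1)%nat -> siteF d Dm A j = sqrt (INR (Dm j)).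
Proof. intros H1 H2. unfold siteF. f_equal.
 rewrite (rsum_ext _ _ (fun a => rsum (Dm j) (fun b => rsum (d j) (fun q => A j a q b * A j a q b)))).
 2:{ intros. rewrite rsum_swap. apply rsum_ext; intros; apply rsum_ext; intros; ring. }
 rewrite rsum_swap. rewrite (rsum_ext _ _ (fun _ => 1)). { rewrite rsum_const. ring. }
 intros b Hb. rewrite Hlc by auto. rewrite Nat.eqb_refl. auto. Qed.
Definition tprop (t : nat -> R) := forall j, (1 <= j)%nat -> (j <= n - 1)%nat ->
  0 <= t j /\ forall X, depL j X -> Nrm d Dm n (Q j n X) <= t j ^ 2 * Nrm d Dm j X.

Lemma tprop_nrm t j X : tprop t -> (1 <= j)%nat -> (j <= n - 1)%nat -> depL j X ->
  nrm d Dm n (Q j n X) <= t j * nrm d Dm j X.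
Proof. intros Ht H1 H2 Hd. destruct (Ht j H1 H2) as [H0 H]. unfold nrm.
 rewrite <- (sqrt_pow2 (t j)) by auto. rewrite <- sqrt_mult by (try apply Nrm_nonneg; nra).
 apply sqrt_le_1_alt. apply H; auto. Qed.

Lemma tprop_frob : tprop (fun _ => frobC n d Dm A).
Proof. intros j H1 H2. split. { pose proof frob_pos. lra. }
 intros X Hd. rewrite split_n by auto. unfold Nrm. rewrite <- msum_scal. apply msum_le. intros p.
 eapply Rle_trans. apply msum_le. intros p'. apply rsum_CS.
 right. rewrite <- (FR j) by auto. rewrite Rmult_comm, <- msum_scal. f_equal. extensionality p'.
 apply Rmult_comm. Qed.

Lemma tprop_spec s : (forall j, (1 <= j)%nat -> (j <= n - 1)%nat -> is_spec_right n d Dm A j (s j)) -> tprop s.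
Proof. intros Hs j H1 H2. destruct (Hs j H1 H2) as [Hub Hlub].
 assert (Hmem : forall x, rsum (Dm j) (fun c => x c ^ 2) <= 1 ->
    sqrt (msum (S j) (n - j) d (fun p => (rsum (Dm j) (fun c => seg Dm A (S j) (n - j) p c O * x c)) ^ 2)) <= s j).
 { intros x Hx. apply Hub. exists x. split; auto. }
 assert (Hs0 : 0 <= s j).
 { eapply Rle_trans; [|apply (Hmem (fun _ => 0))]. apply sqrt_pos.
   rewrite (rsum_ext _ _ (fun _ => 0)), rsum_zero by (intros; ring). lra. }
 split; auto. intros X Hd. rewrite split_n by auto. unfold Nrm. rewrite <- msum_scal. apply msum_le. intros p.
 set (r2 := rsum (Dm j) (fun c => X p c ^ 2)).
 assert (Hr2 : 0 <= r2) by (apply rsum_nonneg; intros; nra).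
 destruct (Req_dec r2 0) as [Hz|Hz].
 - pose proof (rsum_sq_zero _ _ Hz) as HX. rewrite Hz, Rmult_0_r.
   right. rewrite <- (msum_zero (S j) (n - j) d). f_equal. extensionality p'.
   rewrite (rsum_ext _ _ (fun _ => 0)), rsum_zero. ring. intros c Hc. rewrite HX by auto. ring.
 - set (r := sqrt r2). assert (Hr : 0 < r) by (apply sqrt_lt_R0; lra).
   assert (Hrr : r * r = r2) by (apply sqrt_sqrt; lra).
   specialize (Hmem (fun c => X p c / r)).
   set (M := msum (S j) (n - j) d (fun p' => (rsum (Dm j) (fun c => seg Dm A (S j) (n - j) p' c O * X p c)) ^ 2)).
   assert (HM : msum (S j) (n - j) d (fun p' => (rsum (Dm j) (fun c => seg Dm A (S j) (n - j) p' c O * (X p c / r))) ^ 2) = M / r2).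
   { unfold M. unfold Rdiv at 2. rewrite Rmult_comm, <- msum_scal. f_equal. extensionality p'.
     rewrite (rsum_ext _ _ (fun c => / r * (seg Dm A (S j) (n - j) p' c O * X p c))) by (intros; unfold Rdiv; ring).
     rewrite rsum_scal. rewrite <- Hrr. field. lra. }
   cbv beta in Hmem. rewrite HM in Hmem.
   assert (H1' : rsum (Dm j) (fun c => (X p c / r) ^ 2) <= 1).
   { rewrite (rsum_ext _ _ (fun c => / (r * r) * X p c ^ 2)) by (intros; field; lra). rewrite rsum_scal. fold r2. rewrite Hrr.
     right. field. lra. }
   specialize (Hmem H1'). assert (HM0 : 0 <= M) by (apply msum_nonneg; intros; nra).
   assert (M / r2 <= s j ^ 2).
   { rewrite <- (sq_sqrt (M / r2)). 2:{ unfold Rdiv; apply Rmult_le_pos; [lra|]; apply Rlt_le, Rinv_0_lt_compat; lra. } 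
     apply pow_incr. split; auto. apply sqrt_pos. }
   apply (Rmult_le_compat_r r2) in H; [|lra]. unfold Rdiv in H. rewrite Rmult_assoc, Rinv_l, Rmult_1_r in H by lra. auto. Qed.


Lemma Nrm_zero j : Nrm d Dm j (fun _ _ => 0) = 0.
Proof. unfold Nrm. transitivity (msum 1 j d (fun _ => 0)); [|apply msum_zero]. f_equal. extensionality p.
 rewrite (rsum_ext _ _ (fun _ => 0)), rsum_zero by (intros; ring). auto. Qed.

Definition Zs (B : site) (m : nat) : st := fun p y => Psi Dm (perturbed A B) m p y - Psi Dm A m p y.
Definition Ws (B : site) (i : nat) : st := star Dm B (S i) (Psi Dm (perturbed A B) i).

Lemma Z_S B m : Zs B (S m) = fun p y => star Dm A (S m) (Zs B m) p y + Ws B m p y.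
Proof. extensionality p; extensionality y. unfold Zs, Ws. rewrite !Psi_S, star_pert. rewrite star_minus. ring. Qed.

Lemma Z_dep B m : depL m (Zs B m).
Proof. intros p p' H y. unfold Zs. rewrite (Psi_dep _ _ m p p'), (Psi_dep _ A m p p') by auto. auto. Qed.

Lemma tele B m : Zs B m = fun p y => rsum m (fun i => Q (S i) m (Ws B i) p y).
Proof. induction m.
 - extensionality p; extensionality y. unfold Zs, Psi. simpl. ring.
 - rewrite Z_S, IHm. extensionality p; extensionality y. cbn [rsum]. rewrite Q_id. f_equal.
   rewrite (star_rsum Dm A (S m) m (fun i => Q (S i) m (Ws B i))). apply rsum_ext; intros i Hi.
   rewrite (Q_S (S i) m) by lia. auto. Qed.

Lemma Ws_split B i : Ws B i = fun p y => star Dm B (S i) (Psi Dm A i) p y + star Dm B (S i) (Zs B i) p y.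
Proof. unfold Ws. rewrite <- star_plus. f_equal. extensionality p; extensionality y. unfold Zs. ring. Qed.

Fixpoint hh (m : nat) : R := match m with O => 1 | S m' => hh m' * (2 * siteF d Dm A (S m')) end.
Fixpoint cc (m : nat) : R := match m with O => 0 | S m' => (cc m' + hh m') * siteF d Dm A (S m') end.
Lemma hh_nonneg m : 0 <= hh m.
Proof. induction m; simpl; [lra|]. pose proof (siteF_nonneg d Dm A (S m)). nra. Qed.
Lemma cc_nonneg m : 0 <= cc m.
Proof. induction m; simpl; [lra|]. pose proof (siteF_nonneg d Dm A (S m)). pose proof (hh_nonneg m). nra. Qed.

Lemma Zbound B eps : 0 <= eps -> eps <= 1 -> is_pert n d Dm A eps B -> forall m, (m <= n)%nat ->
  nrm d Dm m (Zs B m) <= eps * cc m /\ nrm d Dm m (Psi Dm (perturbed A B) m) <= hh m.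
Proof. intros He0 He1 Hp. induction m; intros Hm.
 - split.
   + assert (E : Zs B 0 = fun (_ : nat -> nat) (_ : nat) => 0) by (extensionality p; extensionality y; unfold Zs, Psi; simpl; ring).
     rewrite E. unfold nrm. rewrite Nrm_zero, sqrt_0. simpl; lra.
   + unfold nrm, Nrm. simpl. rewrite HD0. simpl. unfold Psi. simpl. right. replace (0 + (1 * (1 * 1))) with 1 by ring. apply sqrt_1.
 - destruct (IHm ltac:(lia)) as [HZ HP]. pose proof (siteF_nonneg d Dm A (S m)) as Ha.
   pose proof (Hp (S m) ltac:(lia) Hm) as HB. pose proof (siteF_nonneg d Dm B (S m)) as HBn.
   pose proof (nrm_nonneg d Dm m (Zs B m)). pose proof (nrm_nonneg d Dm m (Psi Dm (perturbed A B) m)).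
   split.
   + rewrite Z_S. eapply Rle_trans. apply nrm_plus.
     pose proof (nrm_star_le d Dm m (Zs B m) A (Z_dep B m)).
     pose proof (nrm_star_le d Dm m (Psi Dm (perturbed A B) m) B (Psi_dep _ _ m)). unfold Ws. simpl.
     assert (nrm d Dm m (Zs B m) * siteF d Dm A (S m) <= eps * cc m * siteF d Dm A (S m)) by (apply Rmult_le_compat_r; auto).
     assert (nrm d Dm m (Psi Dm (perturbed A B) m) * siteF d Dm B (S m) <= hh m * (eps * siteF d Dm A (S m))) by (apply Rmult_le_compat; auto).
     lra.
   + rewrite Psi_S. eapply Rle_trans. apply nrm_star_le. apply Psi_dep. simpl.
     pose proof (siteF_plus d Dm A B (S m)). apply Rmult_le_compat; auto. apply siteF_nonneg. nra. Qed.

Lemma frob_gt0 : contr_nonzero n d Dm A -> 0 < frobC n d Dm A.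
Proof. intros [p [Hp Hc]]. unfold frobC. apply sqrt_lt_R0.
 eapply Rlt_le_trans; [|apply (msum_ge 1 n d _ p)]. 2:{ intros; nra. } 2:{ intros; apply Hp; lia. }
 unfold contr. rewrite (seg_dep _ _ _ _ _ p).
 { unfold contr in Hc. pose proof (Rsqr_pos_lt _ Hc). unfold Rsqr in *. nra. }
 intros i H1 H2. destruct (Nat.leb_spec 1 i), (Nat.ltb_spec i (1 + n)); simpl; auto; lia. Qed.

Lemma relerr_eq B : relerr n d Dm A B = nrm d Dm n (Zs B n) / frobC n d Dm A.
Proof. unfold relerr, nrm. rewrite Nrm_n. reflexivity. Qed.

Lemma nrm_star_iso j X B : depL j X -> IsoP d Dm j X -> nrm d Dm (S j) (star Dm B (S j) X) = siteF d Dm B (S j).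
Proof. intros H1 H2. unfold nrm. rewrite Nrm_star_iso by auto. apply sqrt_pow2. apply siteF_nonneg. Qed.

Lemma term1 B eps t i : 0 <= eps -> eps <= 1 -> is_pert n d Dm A eps B -> tprop t -> (S i <= n - 1)%nat ->
  nrm d Dm n (Q (S i) n (Ws B i)) <= eps * (sqrt (INR (Dm (S i))) * t (S i)) + eps ^ 2 * (frobC n d Dm A * cc i * siteF d Dm A (S i)).
Proof. intros He0 He1 Hp Ht Hi. rewrite Ws_split, Q_plus. eapply Rle_trans. apply nrm_plus.
 pose proof (tprop_nrm t (S i) (star Dm B (S i) (Psi Dm A i)) Ht ltac:(lia) Hi (star_dep _ _ _ _ (Psi_dep _ _ i))).
 pose proof (tprop_nrm _ (S i) (star Dm B (S i) (Zs B i)) tprop_frob ltac:(lia) Hi (star_dep _ _ _ _ (Z_dep B i))).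
 cbv beta in H0. rewrite nrm_star_iso in H by (try apply Psi_dep; apply Psi_iso; lia).
 pose proof (nrm_star_le d Dm i (Zs B i) B (Z_dep B i)).
 destruct (Zbound B eps He0 He1 Hp i ltac:(lia)) as [HZ _].
 pose proof (Hp (S i) ltac:(lia) ltac:(lia)) as HB. rewrite (site_lc (S i)) in HB by lia.
 destruct (Ht (S i) ltac:(lia) Hi) as [Ht0 _]. pose proof frob_pos.
 pose proof (siteF_nonneg d Dm B (S i)). pose proof (nrm_nonneg d Dm i (Zs B i)).
 pose proof (cc_nonneg i). pose proof (siteF_nonneg d Dm A (S i)).
 rewrite (site_lc (S i)) by lia. pose proof (sqrt_pos (INR (Dm (S i)))).
 assert (t (S i) * siteF d Dm B (S i) <= t (S i) * (eps * sqrt (INR (Dm (S i))))) by (apply Rmult_le_compat_l; auto).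
 assert (nrm d Dm i (Zs B i) * siteF d Dm B (S i) <= (eps * cc i) * (eps * sqrt (INR (Dm (S i))))) by (apply Rmult_le_compat; auto).
 assert (frobC n d Dm A * nrm d Dm (S i) (star Dm B (S i) (Zs B i)) <= frobC n d Dm A * ((eps * cc i) * (eps * sqrt (INR (Dm (S i)))))).
 { apply Rmult_le_compat_l. lra. lra. }
 assert (E : eps * (sqrt (INR (Dm (S i))) * t (S i)) + eps ^ 2 * (frobC n d Dm A * cc i * sqrt (INR (Dm (S i))))
   = t (S i) * (eps * sqrt (INR (Dm (S i)))) + frobC n d Dm A * ((eps * cc i) * (eps * sqrt (INR (Dm (S i)))))) by ring.
 rewrite E. lra. Qed.

Lemma term2 B eps : 0 <= eps -> eps <= 1 -> is_pert n d Dm A eps B ->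
  nrm d Dm n (Q (S (n - 1)) n (Ws B (n - 1))) <= eps * siteF d Dm A n + eps ^ 2 * (cc (n - 1) * siteF d Dm A n).
Proof. intros He0 He1 Hp.
 destruct (Zbound B eps He0 He1 Hp (n - 1) ltac:(lia)) as [HZ _].
 pose proof (Hp n ltac:(lia) ltac:(lia)) as HB.
 pose proof (Psi_iso (n - 1) ltac:(lia)) as Hiso.
 pose proof (nrm_star_le d Dm (n - 1) (Zs B (n - 1)) B (Z_dep B (n - 1))).
 pose proof (nrm_star_iso (n - 1) (Psi Dm A (n - 1)) B (Psi_dep _ _ _) Hiso).
 pose proof (siteF_nonneg d Dm B n). pose proof (nrm_nonneg d Dm (n - 1) (Zs B (n - 1))).
 pose proof (cc_nonneg (n - 1)). pose proof (siteF_nonneg d Dm A n).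
 replace (S (n - 1)) with n in * by lia.
 rewrite Q_id, Ws_split. eapply Rle_trans. apply nrm_plus.
 replace (S (n - 1)) with n by lia. rewrite H0.
 assert (nrm d Dm (n - 1) (Zs B (n - 1)) * siteF d Dm B n <= (eps * cc (n - 1)) * (eps * siteF d Dm A n)) by (apply Rmult_le_compat; auto).
 nra. Qed.

Theorem core : contr_nonzero n d Dm A -> exists K eps0 : R, 0 < eps0 /\ 0 <= K /\
  forall t, tprop t -> forall eps B, 0 <= eps -> eps <= eps0 -> is_pert n d Dm A eps B ->
  relerr n d Dm A B <= eps * (1 + rsum (n - 1) (fun i => sqrt (INR (Dm (S i))) * t (S i) / frobC n d Dm A)) + K * eps ^ 2.
Proof. intros Hnz. pose proof (frob_gt0 Hnz) as HF. set (F := frobC n d Dm A) in *.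
 set (K0 := rsum (n - 1) (fun i => F * cc i * siteF d Dm A (S i)) + cc (n - 1) * siteF d Dm A n).
 assert (HK0 : 0 <= K0).
 { unfold K0. assert (0 <= rsum (n - 1) (fun i => F * cc i * siteF d Dm A (S i))).
   { apply rsum_nonneg; intros. pose proof (cc_nonneg i). pose proof (siteF_nonneg d Dm A (S i)).
     apply Rmult_le_pos; [apply Rmult_le_pos|]; lra. }
   pose proof (cc_nonneg (n - 1)). pose proof (siteF_nonneg d Dm A n). nra. }
 exists (K0 / F), 1. split; [lra|]. split. { unfold Rdiv. apply Rmult_le_pos; [lra|]. apply Rlt_le, Rinv_0_lt_compat; lra. }
 intros t Ht eps B He0 He1 Hp. rewrite relerr_eq.
 set (S1 := rsum (n - 1) (fun i => sqrt (INR (Dm (S i))) * t (S i))).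
 assert (HN : nrm d Dm n (Zs B n) <= eps * (S1 + F) + eps ^ 2 * K0).
 { rewrite tele. eapply Rle_trans. apply nrm_sum.
   rewrite (rsum_lastn n) by lia. cbv beta.
   pose proof (term2 B eps He0 He1 Hp). fold F in H. rewrite <- frob_site in H. fold F in H.
   assert (rsum (n - 1) (fun i => nrm d Dm n (Q (S i) n (Ws B i))) <=
       rsum (n - 1) (fun i => eps * (sqrt (INR (Dm (S i))) * t (S i)) + eps ^ 2 * (F * cc i * siteF d Dm A (S i)))).
   { apply rsum_le. intros i Hi. apply term1; auto; lia. }
   rewrite rsum_plus, rsum_scal, rsum_scal in H0.
   eapply Rle_trans. apply Rplus_le_compat. exact H0. exact H.
   unfold K0, S1. rewrite <- frob_site. fold F. nra. }
 apply (Rmult_le_compat_r (/ F)) in HN; [|apply Rlt_le, Rinv_0_lt_compat; lra].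
 unfold Rdiv. eapply Rle_trans; [apply HN|]. right.
 rewrite (rsum_ext _ _ (fun i => / F * (sqrt (INR (Dm (S i))) * t (S i)))) by (intros; unfold Rdiv; ring).
 rewrite rsum_scal. fold S1. field. lra. Qed.
End Core.

Lemma P1 n d Dm D A : mps_shape n Dm ->
  (forall j, (1 <= j)%nat -> (j <= n - 1)%nat -> (Dm j <= D)%nat) ->
  left_canonical n d Dm A -> contr_nonzero n d Dm A ->
  exists K eps0 : R, 0 < eps0 /\ 0 <= K /\
  (forall t, tprop n d Dm A t -> forall eps delta, 0 <= eps -> eps <= eps0 -> is_pert n d Dm A eps delta ->
     relerr n d Dm A delta <= eps * (1 + rsum (n - 1) (fun i => sqrt (INR (Dm (S i))) * t (S i) / frobC n d Dm A)) + K * eps ^ 2) /\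
  (forall eps delta, 0 <= eps -> eps <= eps0 -> is_pert n d Dm A eps delta ->
     relerr n d Dm A delta <= eps * (1 + INR (n - 1) * sqrt (INR D)) + K * eps ^ 2).
Proof. intros [Hn [HD0 HDn]] HD Hlc Hnz.
 destruct (core n d Dm A Hn HD0 HDn Hlc Hnz) as [K [e0 [He0 [HK Hc]]]].
 exists K, e0. split; auto. split; auto. split; auto.
 intros eps delta H1 H2 H3. eapply Rle_trans. apply (Hc _ (tprop_frob n d Dm A Hn HD0 HDn Hlc) eps delta); auto.
 pose proof (frob_gt0 n d Dm A Hn HD0 HDn Hnz) as HF.
 assert (rsum (n - 1) (fun i => sqrt (INR (Dm (S i))) * frobC n d Dm A / frobC n d Dm A) <= INR (n - 1) * sqrt (INR D)).
 { apply rsum_le_const. intros i Hi. replace (sqrt (INR (Dm (S i))) * frobC n d Dm A / frobC n d Dm A) with (sqrt (INR (Dm (S i)))) by (field; lra).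
   apply sqrt_le_1_alt. apply le_INR. apply HD; lia. }
 cbv beta. apply Rplus_le_compat_r. apply Rmult_le_compat_l; lra. Qed.

Definition ex_d (D : nat) : nat -> nat := fun j => if Nat.eqb j 1 then D else 1%nat.
Definition ex_Dm (n D : nat) : nat -> nat := fun j => if Nat.eqb j 0 then 1%nat else if Nat.leb n j then 1%nat else D.
Definition ex_A (n : nat) : site := fun j a q b =>
  if Nat.eqb j n then (if andb (Nat.eqb a 0) (Nat.eqb q 0) then 1 else 0)
  else if Nat.eqb j 1 then (if Nat.eqb q b then 1 else 0) else (if Nat.eqb a b then 1 else 0).
Definition ex_del (n D : nat) (eps : R) : site := fun j a q b =>
  if Nat.eqb j n then eps * ex_A n j a q b
  else (eps * sqrt (INR D)) * (if andb (andb (Nat.eqb a 0) (Nat.eqb q 0)) (Nat.eqb b 0) then 1 else 0).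

Section Ex.
Variable n D : nat.
Hypothesis Hn : (1 <= n)%nat.
Hypothesis HD : (1 <= D)%nat.

Lemma ex_shape : mps_shape n (ex_Dm n D).
Proof. unfold mps_shape, ex_Dm. split; auto. simpl. split; auto.
 destruct (Nat.eqb_spec n 0); [lia|]. rewrite Nat.leb_refl. auto. Qed.

Lemma ex_Dm_pos j : (1 <= ex_Dm n D j)%nat.
Proof. unfold ex_Dm. destruct (Nat.eqb j 0), (Nat.leb n j); lia. Qed.
Lemma ex_d_pos j : (1 <= ex_d D j)%nat.
Proof. unfold ex_d. destruct (Nat.eqb j 1); lia. Qed.
Lemma ex_Dm_mid j : (1 <= j)%nat -> (j <= n - 1)%nat -> ex_Dm n D j = D.
Proof. intros. unfold ex_Dm. destruct (Nat.eqb_spec j 0); [lia|]. destruct (Nat.leb_spec n j); [lia|]. auto. Qed.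

Lemma ex_lc : left_canonical n (ex_d D) (ex_Dm n D) (ex_A n).
Proof. intros j H1 H2 b b' Hb Hb'. rewrite ex_Dm_mid in Hb, Hb' by auto. unfold ex_A.
 destruct (Nat.eqb_spec j n); [lia|].
 destruct (Nat.eqb_spec j 1).
 - subst. simpl. unfold ex_d. simpl.
   rewrite (rsum_delta D b (fun q => if Nat.eqb q b' then 1 else 0)) by auto. ring.
 - unfold ex_d. destruct (Nat.eqb_spec j 1); [lia|]. rewrite (ex_Dm_mid (j - 1)) by lia.
   rewrite (rsum_ext _ _ (fun a => (if Nat.eqb a b then 1 else 0) * (if Nat.eqb a b' then 1 else 0))).
   2:{ intros. simpl. ring. }
   rewrite (rsum_delta D b (fun a => if Nat.eqb a b' then 1 else 0)) by auto. auto. Qed.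

Definition zero : nat -> nat := fun _ => O.

Lemma ex_seg eps : forall m, (m < n)%nat -> forall y,
  Psi (ex_Dm n D) (perturbed (ex_A n) (ex_del n D eps)) m zero y = (1 + eps * sqrt (INR D)) ^ m * (if Nat.eqb y 0 then 1 else 0).
Proof. induction m; intros Hm y.
 - unfold Psi. simpl. destruct y; simpl; ring.
 - rewrite Psi_S. unfold star. rewrite sub1.
   rewrite (rsum_ext _ _ (fun z => (if Nat.eqb z 0 then 1 else 0) * ((1 + eps * sqrt (INR D)) ^ m * perturbed (ex_A n) (ex_del n D eps) (S m) z (zero (S m)) y))).
   2:{ intros z _. rewrite IHm by lia. ring. }
   rewrite rsum_delta by (pose proof (ex_Dm_pos m); lia).
   unfold perturbed, ex_A, ex_del, zero. destruct (Nat.eqb_spec (S m) n); [lia|]. simpl.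
   destruct (Nat.eqb_spec m 0); destruct y; simpl; ring. Qed.

Lemma ex_contr eps : contr n (ex_Dm n D) (perturbed (ex_A n) (ex_del n D eps)) zero = (1 + eps * sqrt (INR D)) ^ (n - 1) * (1 + eps).
Proof. change (contr n (ex_Dm n D) (perturbed (ex_A n) (ex_del n D eps)) zero) with
   (Psi (ex_Dm n D) (perturbed (ex_A n) (ex_del n D eps)) n zero O).
 transitivity (Psi (ex_Dm n D) (perturbed (ex_A n) (ex_del n D eps)) (S (n - 1)) zero O). { f_equal; lia. }
 rewrite Psi_S. unfold star. rewrite sub1.
 rewrite (rsum_ext _ _ (fun z => (if Nat.eqb z 0 then 1 else 0) * ((1 + eps * sqrt (INR D)) ^ (n - 1) * perturbed (ex_A n) (ex_del n D eps) (S (n - 1)) z (zero (S (n - 1))) O))).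
 2:{ intros z _. rewrite ex_seg by lia. ring. }
 rewrite rsum_delta by (pose proof (ex_Dm_pos (n - 1)); lia).
 replace (S (n - 1)) with n by lia.
 unfold perturbed, ex_del, zero. rewrite Nat.eqb_refl. unfold ex_A. rewrite Nat.eqb_refl. simpl. ring. Qed.

Lemma ex_pert0 : perturbed (ex_A n) (ex_del n D 0) = ex_A n.
Proof. extensionality j; extensionality a; extensionality q; extensionality b. unfold perturbed, ex_del.
 destruct (Nat.eqb j n); ring. Qed.

Lemma ex_contr0 : contr n (ex_Dm n D) (ex_A n) zero = 1.
Proof. rewrite <- ex_pert0, ex_contr. simpl. rewrite Rmult_0_l, Rplus_0_r, pow1. ring. Qed.

Lemma ex_nonzero : contr_nonzero n (ex_d D) (ex_Dm n D) (ex_A n).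
Proof. exists zero. split. { intros. unfold zero. pose proof (ex_d_pos j). lia. } rewrite ex_contr0. lra. Qed.


Lemma ex_frob : frobC n (ex_d D) (ex_Dm n D) (ex_A n) = 1.
Proof. destruct ex_shape as [_ [HD0 HDn]].
 rewrite (frob_site n (ex_d D) (ex_Dm n D) (ex_A n) Hn HD0 HDn ex_lc).
 unfold siteF. rewrite <- sqrt_1. f_equal. rewrite HDn.
 rewrite (rsum_ext _ _ (fun a => (if Nat.eqb a 0 then 1 else 0) * 1)). 
 { rewrite (rsum_delta _ 0 (fun _ => 1)); auto. pose proof (ex_Dm_pos (n - 1)); lia. }
 intros a _. rewrite (rsum_ext _ _ (fun q => (if Nat.eqb a 0 then 1 else 0) * ((if Nat.eqb q 0 then 1 else 0) * 1))).
 { rewrite rsum_scal, (rsum_delta _ 0 (fun _ => 1)); auto. pose proof (ex_d_pos n); lia. }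
 intros q _. simpl. unfold ex_A. rewrite Nat.eqb_refl. destruct (Nat.eqb a 0), (Nat.eqb q 0); simpl; ring. Qed.

Lemma ex_is_pert eps : 0 <= eps -> is_pert n (ex_d D) (ex_Dm n D) (ex_A n) eps (ex_del n D eps).
Proof. intros He j H1 H2. destruct (Nat.eqb_spec j n).
 - subst j. assert (E : siteF (ex_d D) (ex_Dm n D) (ex_del n D eps) n =
      sqrt (PhiT (ex_d D) (ex_Dm n D) n (fun t => (eps * ex_A n n (fst (fst t)) (snd (fst t)) (snd t)) ^ 2))).
   { unfold siteF, PhiT, ex_del. rewrite Nat.eqb_refl. reflexivity. }
   rewrite E, (PLF_scale_sqrt _ (PLF_PhiT _ _ n)). rewrite Rabs_pos_eq by auto. right. reflexivity.
 - rewrite (site_lc n (ex_d D) (ex_Dm n D) (ex_A n) ex_lc j) by lia. rewrite ex_Dm_mid by lia.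
   unfold siteF. set (c := eps * sqrt (INR D)).
   assert (Hc : 0 <= c) by (unfold c; pose proof (sqrt_pos (INR D)); nra).
   right. rewrite <- (sqrt_pow2 c) by auto. f_equal.
   rewrite (rsum_ext _ _ (fun a => (if Nat.eqb a 0 then 1 else 0) * (c ^ 2))).
   { rewrite (rsum_delta _ 0 (fun _ => c ^ 2)); auto. pose proof (ex_Dm_pos (j - 1)); lia. }
   intros a _. rewrite (rsum_ext _ _ (fun q => (if Nat.eqb q 0 then 1 else 0) * ((if Nat.eqb a 0 then 1 else 0) * c ^ 2))).
   { rewrite (rsum_delta _ 0 (fun _ => _)); auto. pose proof (ex_d_pos j); lia. }
   intros q _. rewrite (rsum_ext _ _ (fun b => (if Nat.eqb b 0 then 1 else 0) * ((if Nat.eqb q 0 then 1 else 0) * ((if Nat.eqb a 0 then 1 else 0) * c ^ 2)))).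
   { rewrite (rsum_delta _ 0 (fun _ => _)); auto. pose proof (ex_Dm_pos j); lia. }
   intros b _. unfold ex_del. destruct (Nat.eqb_spec j n); [lia|]. fold c.
   destruct (Nat.eqb a 0), (Nat.eqb q 0), (Nat.eqb b 0); simpl; ring. Qed.

Lemma bernoulli c k : 0 <= c -> 1 + INR k * c <= (1 + c) ^ k.
Proof. intros Hc. induction k. { simpl; lra. } rewrite S_INR. simpl.
 pose proof (pos_INR k).
 assert ((1 + c) * (1 + INR k * c) <= (1 + c) * (1 + c) ^ k) by (apply Rmult_le_compat_l; lra). nra. Qed.

Lemma ex_lower eps : 0 <= eps -> eps * (1 + INR (n - 1) * sqrt (INR D)) <= relerr n (ex_d D) (ex_Dm n D) (ex_A n) (ex_del n D eps).
Proof. intros He. unfold relerr. rewrite ex_frob. unfold Rdiv. rewrite Rinv_1, Rmult_1_r.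
 set (c := eps * sqrt (INR D)). assert (Hc : 0 <= c) by (unfold c; pose proof (sqrt_pos (INR D)); nra).
 set (F := fun p => (contr n (ex_Dm n D) (perturbed (ex_A n) (ex_del n D eps)) p - contr n (ex_Dm n D) (ex_A n) p) ^ 2).
 assert (Hge : F zero <= msum 1 n (ex_d D) F).
 { eapply Rle_trans; [|apply (msum_ge 1 n (ex_d D) F zero)]. 
   - right. f_equal. extensionality i. unfold zero. destruct (andb _ _); auto.
   - intros; unfold F; apply pow2_ge_0.
   - intros. unfold zero. pose proof (ex_d_pos i). lia. }
 unfold F in Hge. rewrite ex_contr, ex_contr0 in Hge. fold c in Hge.
 pose proof (bernoulli c (n - 1) Hc).
 assert (Hx : eps * (1 + INR (n - 1) * sqrt (INR D)) <= (1 + c) ^ (n - 1) * (1 + eps) - 1).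
 { pose proof (pos_INR (n - 1)).
   assert ((1 + INR (n - 1) * c) * (1 + eps) <= (1 + c) ^ (n - 1) * (1 + eps)) by (apply Rmult_le_compat_r; lra).
   assert (0 <= INR (n - 1) * c * eps) by (apply Rmult_le_pos; [apply Rmult_le_pos|]; lra).
   unfold c in *. nra. }
 eapply Rle_trans. apply Hx. rewrite <- (sqrt_pow2 ((1 + c) ^ (n - 1) * (1 + eps) - 1)).
 2:{ eapply Rle_trans; [|apply Hx]. apply Rmult_le_pos; auto. pose proof (pos_INR (n - 1)). pose proof (sqrt_pos (INR D)). nra. }
 apply sqrt_le_1_alt. exact Hge. Qed.
End Ex.
Theorem mainTheorem12 :
  (* Part 1: first-order error bound *)
  (forall (n : nat) (d Dm : nat -> nat) (D : nat) (A : site) (s : nat -> R),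
     mps_shape n Dm ->
     (forall j, (1 <= j)%nat -> (j <= n - 1)%nat -> (Dm j <= D)%nat) ->
     left_canonical n d Dm A ->
     contr_nonzero n d Dm A ->
     (forall j, (1 <= j)%nat -> (j <= n - 1)%nat -> is_spec_right n d Dm A j (s j)) ->
     exists K eps0 : R, 0 < eps0 /\
       forall (eps : R) (delta : site),
         0 <= eps -> eps <= eps0 ->
         is_pert n d Dm A eps delta ->
         relerr n d Dm A delta
           <= eps * (1 + rsum (n - 1) (fun i =>
                  sqrt (INR (Dm (S i))) * s (S i) / frobC n d Dm A))
              + K * eps ^ 2
         /\
         relerr n d Dm A delta
           <= eps * (1 + INR (n - 1) * sqrt (INR D)) + K * eps ^ 2)
  /\
  (* Part 2: tightness when all bond dimensions equal D *)
  (forall (n D : nat) (eta : R),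
     (1 <= n)%nat -> (1 <= D)%nat -> 0 < eta ->
     exists (d Dm : nat -> nat) (A : site) (L : R),
       mps_shape n Dm /\
       (forall j, (1 <= j)%nat -> (j <= n - 1)%nat -> Dm j = D) /\
       left_canonical n d Dm A /\
       contr_nonzero n d Dm A /\
       Rabs (L - (1 + INR (n - 1) * sqrt (INR D))) < eta /\
       (* L = lim_{eps -> 0+} eps^{-1} sup_delta relerr *)
       (forall eta' : R, 0 < eta' ->
          exists rho : R, 0 < rho /\
            forall eps : R, 0 < eps -> eps < rho ->
              exists sup : R,
                is_lub (fun r => exists delta : site,
                          is_pert n d Dm A eps delta /\ r = relerr n d Dm A delta) sup
                /\ Rabs (sup / eps - L) < eta')).
Proof. split.
 - intros n d Dm D A s Hsh HD Hlc Hnz Hs.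
   destruct (P1 n d Dm D A Hsh HD Hlc Hnz) as [K [e0 [He0 [HK [H1 H2]]]]].
   destruct Hsh as [Hn [HD0 HDn]].
   exists K, e0. split; auto. intros eps delta Ha Hb Hc. split.
   + apply H1; auto. apply tprop_spec; auto.
   + apply H2; auto.
 - intros n D eta Hn HD Heta.
   exists (ex_d D), (ex_Dm n D), (ex_A n), (1 + INR (n - 1) * sqrt (INR D)).
   split. apply ex_shape; auto. split. intros; apply ex_Dm_mid; auto.
   split. apply ex_lc; auto. split. apply ex_nonzero; auto.
   split. { rewrite Rminus_diag, Rabs_R0. auto. }
   set (L := 1 + INR (n - 1) * sqrt (INR D)).
   destruct (P1 n (ex_d D) (ex_Dm n D) D (ex_A n) (ex_shape n D Hn HD)) as [K [e0 [He0 [HK [_ H2]]]]].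
   { intros; rewrite ex_Dm_mid; auto. } { apply ex_lc; auto. } { apply ex_nonzero; auto. }
   intros eta' Heta'. exists (Rmin e0 (eta' / (K + 1))). split.
   { apply Rmin_glb_lt; auto. apply Rdiv_lt_0_compat; lra. }
   intros eps He Hr. 
   assert (Hr1 : eps <= e0) by (pose proof (Rmin_l e0 (eta' / (K + 1))); lra).
   assert (Hr2 : eps < eta' / (K + 1)) by (pose proof (Rmin_r e0 (eta' / (K + 1))); lra).
   set (E := fun r => exists delta : site, is_pert n (ex_d D) (ex_Dm n D) (ex_A n) eps delta /\ r = relerr n (ex_d D) (ex_Dm n D) (ex_A n) delta).
   assert (Hb : bound E).
   { exists (eps * L + K * eps ^ 2). intros r [delta [Hp Hr']]. subst r. apply H2; auto; lra. }
   assert (Hne : exists r, E r).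
   { exists (relerr n (ex_d D) (ex_Dm n D) (ex_A n) (ex_del n D eps)). exists (ex_del n D eps). split; auto.
     apply ex_is_pert; auto; lra. }
   destruct (completeness E Hb Hne) as [m [Hub Hlub]].
   exists m. split. { split; auto. }
   assert (Hlo : eps * L <= m).
   { eapply Rle_trans. apply ex_lower; auto; lra. apply Hub. exists (ex_del n D eps). split; auto. apply ex_is_pert; auto; lra. }
   assert (Hhi : m <= eps * L + K * eps ^ 2).
   { apply Hlub. intros r [delta [Hp Hr']]. subst r. apply H2; auto; lra. }
   assert (Hlo' : L <= m / eps). { apply (Rmult_le_reg_r eps); [lra|]. unfold Rdiv. rewrite Rmult_assoc, Rinv_l by lra. lra. }
   assert (Hhi' : m / eps <= L + K * eps). { apply (Rmult_le_reg_r eps); [lra|]. unfold Rdiv. rewrite Rmult_assoc, Rinv_l by lra. nra. }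
   assert (HKe : K * eps < eta').
   { assert (Hq : (K + 1) * eps < (K + 1) * (eta' / (K + 1))) by (apply Rmult_lt_compat_l; lra).
     replace ((K + 1) * (eta' / (K + 1))) with eta' in Hq by (field; lra). nra. }
   rewrite Rabs_pos_eq by lra. lra.
Qed.
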